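(* Let $k$ be a field, $d\in\mathbb{N}$, $X=Q_d\times\mathcal{L}\mathbb{G}_m$ and $Y=\mathcal{L}^{\le d}\mathbb{A}^1$, and let $\beta_d:X\to Y$ be $\beta_d(q,u)=uq$. Then $\beta_d$ is surjective on $k$-points, and for every $x\in X(k)$ with image $y=\beta_d(x)\in Y(k)$ the induced morphism of formal completions $\hat X_x\to\hat Y_y$ is formally smooth.
   Context: $\mathcal{L}\mathbb{A}^1=\operatorname{Spec}k[x_0,x_1,\ldots]$ is the arc space of the affine line, whose $R$-points are formal series $x_0+x_1t+\cdots\in R[[t]]$. $\mathcal{L}^{\le d}\mathbb{A}^1$ is the open subscheme of $\mathcal{L}\mathbb{A}^1$ which is the preimage of the complement of $0$ under the projection to $\operatorname{Spec}k[x_0,\ldots,x_d]$; its $k$-points are the series of $t$-adic valuation $\le d$. $Q_d$ is the closed affine subspace of $\mathcal{L}\mathbb{A}^1$ defined by $x_d=1$, $x_{d+1}=x_{d+2}=\cdots=0$, i.e. monic polynomials of degree $d$. $\mathcal{L}\mathbb{G}_m$ represents $R\mapsto R[[t]]^\times$. Formal smoothness of $\hat X_x\to\hat Y_y$ means the infinitesimal lifting property with respect to surjections of Artinian local $k$-algebras. *)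

(* Defs.v *)
From mathcomp Require Import all_boot all_order all_algebra.
Set Implicit Arguments. Unset Strict Implicit. Unset Printing Implicit Defensive.
Import GRing.Theory.
Local Open Scope ring_scope.

Definition is_unit_el (R : comNzRingType) (x : R) : Prop := exists y : R, x * y = 1.

Definition is_ideal (R : comNzRingType) (I : R -> Prop) : Prop :=
  [/\ I 0, (forall a b, I a -> I b -> I (a + b)) & (forall r a, I a -> I (r * a))].

Definition local_ring (R : comNzRingType) : Prop :=
  is_ideal (fun x : R => ~ is_unit_el x).

Definition artinian (R : comNzRingType) : Prop :=
  forall I : nat -> R -> Prop,
    (forall n, is_ideal (I n)) -> (forall n x, I n.+1 x -> I n x) ->
    exists N, forall n, (N <= n)%N -> forall x, I n x <-> I N x.

(* A series a_0 + a_1 t + ... is represented by n |-> a_n. *)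
Definition smul (R : comNzRingType) (f g : nat -> R) : nat -> R :=
  fun n => \sum_(i < n.+1) f i * g (n - i)%N.

Definition sone (R : comNzRingType) : nat -> R := fun n => if n == 0%N then 1 else 0.

Definition Qd_pt (R : comNzRingType) (d : nat) (q : nat -> R) : Prop :=
  q d = 1 /\ forall n, (d < n)%N -> q n = 0.

Definition LGm_pt (R : comNzRingType) (u : nat -> R) : Prop :=
  exists v : nat -> R, forall n, smul u v n = sone R n.

(* R-points of L^{<=d} A^1 : series whose coefficients x_0..x_d generate the
   unit ideal of R (i.e. Spec R -> A^{d+1} lands in the complement of 0). *)
Definition LleA1_pt (R : comNzRingType) (d : nat) (f : nat -> R) : Prop :=
  exists c : nat -> R, \sum_(i < d.+1) c i * f i = 1.

(* For a local k-algebra A and a k-point s (a series over k), an A-series a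
   reduces to s modulo the maximal ideal (the non-units) of A. *)
Definition reduces_to (k : fieldType) (A : comAlgType k) (a : nat -> A) (s : nat -> k) : Prop :=
  forall n, ~ is_unit_el (a n - (s n)%:A).

(* Formal smoothness of \hat X_x -> \hat Y_y for beta_d at x = (q,u):
   infinitesimal lifting w.r.t. surjections A ->> B of Artinian local k-algebras. *)
Definition beta_formally_smooth_at (k : fieldType) (d : nat) (q u : nat -> k) : Prop :=
  forall (A B : comAlgType k) (phi : {lrmorphism A -> B}),
    local_ring A -> artinian A -> local_ring B -> artinian B ->
    (forall b : B, exists a : A, phi a = b) ->
    forall (qB uB : nat -> B) (fA : nat -> A),
      Qd_pt d qB -> LGm_pt uB -> reduces_to qB q -> reduces_to uB u ->
      LleA1_pt d fA -> reduces_to fA (smul u q) ->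
      (forall n, phi (fA n) = smul uB qB n) ->
      exists (qA uA : nat -> A),
        Qd_pt d qA /\ LGm_pt uA /\ reduces_to qA q /\ reduces_to uA u /\
        (forall n, phi (qA n) = qB n) /\ (forall n, phi (uA n) = uB n) /\
        (forall n, smul uA qA n = fA n).

(* Main.v *)
Require Import Defs.
From mathcomp Require Import all_boot all_order all_algebra ring.
From Stdlib Require Import FunctionalExtensionality Classical IndefiniteDescription.
Set Implicit Arguments. Unset Strict Implicit. Unset Printing Implicit Defensive.
Import GRing.Theory.
Local Open Scope ring_scope.

Section Series.
Variable R : comNzRingType.
Implicit Types f g h : nat -> R.

Definition sP (N : nat) f : {poly R} := \poly_(i < N) f i.

Lemma coef_sP N f i : (sP N f)`_i = if (i < N)%N then f i else 0.
Proof. by rewrite coef_poly. Qed.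

Lemma coefM_eq (p p' q q' : {poly R}) n :
  (forall i, (i <= n)%N -> p`_i = p'`_i) -> (forall i, (i <= n)%N -> q`_i = q'`_i) ->
  (p * q)`_n = (p' * q')`_n.
Proof.
move=> Hp Hq; rewrite !coefM; apply: eq_bigr => i _.
by rewrite Hp ?Hq // ?leq_subr // -ltnS.
Qed.

Lemma smul_sP N f g n : (n < N)%N -> smul f g n = (sP N f * sP N g)`_n.
Proof.
move=> nN; rewrite coefM /smul; apply: eq_bigr => i _.
have iN : (i < N)%N by apply: leq_ltn_trans nN; rewrite -ltnS.
have iN' : (n - i < N)%N by apply: leq_ltn_trans nN; rewrite leq_subr.
by rewrite !coef_sP iN iN'.
Qed.

Lemma sP_smul N f g i : (i < N)%N -> (sP N (smul f g))`_i = (sP N f * sP N g)`_i.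
Proof. by move=> iN; rewrite coef_sP iN (smul_sP _ _ iN). Qed.

Lemma smulC f g : smul f g = smul g f.
Proof.
apply: functional_extensionality => n.
by rewrite (smul_sP _ _ (ltnSn n)) (smul_sP _ _ (ltnSn n)) mulrC.
Qed.

Lemma smulA f g h : smul (smul f g) h = smul f (smul g h).
Proof.
apply: functional_extensionality => n.
rewrite (smul_sP _ _ (ltnSn n)) (smul_sP _ _ (ltnSn n)).
rewrite (@coefM_eq _ (sP n.+1 f * sP n.+1 g) _ (sP n.+1 h)); last 2 first.
- by move=> i Hi; rewrite sP_smul.
- by [].
rewrite [in RHS](@coefM_eq _ (sP n.+1 f) _ (sP n.+1 g * sP n.+1 h)).
- by rewrite mulrA.
- by [].
- by move=> i Hi; rewrite sP_smul.
Qed.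

Definition sadd f g := fun n => f n + g n.
Definition sopp f := fun n => - f n.
Definition szero := fun n : nat => (0 : R).

Lemma smulDl f g h : smul (sadd f g) h = sadd (smul f h) (smul g h).
Proof.
apply: functional_extensionality => n.
by rewrite /smul /sadd -big_split; apply: eq_bigr => i _; rewrite mulrDl.
Qed.

Lemma smulNl f g : smul (sopp f) g = sopp (smul f g).
Proof.
apply: functional_extensionality => n.
by rewrite /smul /sopp -sumrN; apply: eq_bigr => i _; rewrite mulNr.
Qed.

Lemma smul0l g : smul szero g = szero.
Proof.
apply: functional_extensionality => n.
by rewrite /smul /szero big1 // => i _; rewrite mul0r.
Qed.

Lemma smul1l g : smul (sone R) g = g.
Proof.
apply: functional_extensionality => n.
rewrite /smul big_ord_recl /= /sone eqxx mul1r subn0 big1 ?addr0 // => i _.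
by rewrite /bump /= mul0r.
Qed.

Lemma smul0 f g : smul f g 0 = f 0 * g 0.
Proof. by rewrite /smul big_ord1. Qed.

Definition shl (v : nat) f := fun n => f (n + v)%N.
Definition shr (v : nat) f := fun n => if (v <= n)%N then f (n - v)%N else 0.
Definition trunc (v : nat) f := fun n => if (n < v)%N then f n else 0.

Lemma shr_smul v f g : smul (shr v f) g = shr v (smul f g).
Proof.
apply: functional_extensionality => n.
rewrite (smul_sP _ _ (ltnSn n)).
rewrite (@coefM_eq _ ('X^v * sP n.+1 f) _ (sP n.+1 g)); last 2 first.
- move=> i Hi; rewrite coefXnM !coef_sP /shr ltnS Hi.
  case: leqP => vi; first by rewrite ifT // ltnS (leq_trans (leq_subr _ _) Hi).
  by [].
- by [].
rewrite -mulrA coefXnM /shr; case: leqP => vn.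
  by rewrite (smul_sP _ _ (ltnSn _)) ; apply: coefM_eq => i Hi; rewrite !coef_sP !ltnS Hi (leq_trans Hi (leq_subr _ _)).
by [].
Qed.

Lemma shl_shr v f : shl v (shr v f) = f.
Proof.
apply: functional_extensionality => n.
by rewrite /shl /shr leq_addl addnK.
Qed.

Lemma shr_shl_trunc v f : f = sadd (shr v (shl v f)) (trunc v f).
Proof.
apply: functional_extensionality => n.
rewrite /sadd /shr /shl /trunc; case: leqP => vn.
  by rewrite subnK // addr0.
by rewrite add0r.
Qed.


Section Inv.
Variables (c : nat -> R) (a : R).
Hypothesis ca : c 0 * a = 1.
Fixpoint invl N : seq R := match N with
 | 0 => [:: a]
 | N'.+1 => let l := invl N' in
     rcons l (- a * \sum_(i < N'.+1) c i.+1 * nth 0 l (N' - i)) end.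

Lemma size_invl N : size (invl N) = N.+1.
Proof. by elim: N => //= N IH; rewrite size_rcons IH. Qed.

Lemma nth_invl m k n : (n <= m)%N -> nth 0 (invl (m + k)) n = nth 0 (invl m) n.
Proof.
move=> nm; elim: k => [|k IH]; first by rewrite addn0.
by rewrite addnS /= nth_rcons size_invl ltnS (leq_trans nm (leq_addr _ _)) IH.
Qed.

Definition sinv n := nth 0 (invl n) n.

Lemma sinvE N n : (n <= N)%N -> nth 0 (invl N) n = sinv n.
Proof. by move=> nN; rewrite -(subnKC nN) nth_invl. Qed.

Lemma smul_sinv : smul c sinv = sone R.
Proof.
apply: functional_extensionality => n.
case: n => [|N]; first by rewrite smul0 /sinv /= ca.
rewrite /smul big_ord_recl /= subn0 /sone /=.
rewrite {1}/sinv /= nth_rcons size_invl ltnn eqxx.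
set S1 := \sum_(i < N.+1) _ * _.
set S2 := \sum_(i < N.+1) _ * _.
have -> : S2 = S1.
  by apply: eq_bigr => i _; rewrite /bump /= subSS sinvE // leq_subr.
by rewrite mulrA mulrN ca mulN1r addNr.
Qed.
End Inv.

End Series.

Section Morph.
Variables (A B : comNzRingType) (phi : {rmorphism A -> B}).
Lemma smul_morph (f g : nat -> A) n :
  phi (smul f g n) = smul (fun i => phi (f i)) (fun i => phi (g i)) n.
Proof. by rewrite /smul rmorph_sum; apply: eq_bigr => i _; rewrite rmorphM. Qed.
Lemma sone_morph n : phi (sone A n) = sone B n.
Proof. by rewrite /sone; case: (n == 0)%N; rewrite ?rmorph1 ?rmorph0. Qed.
End Morph.
Section Local.
Variable R : comNzRingType.
Hypothesis loc : local_ring R.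
Hypothesis art : artinian R.

Lemma unit1 : is_unit_el (1 : R).
Proof. by exists 1; rewrite mulr1. Qed.

Lemma nonunitM (r x : R) : ~ is_unit_el x -> ~ is_unit_el (r * x).
Proof. by case: loc => _ _ H; apply: H. Qed.

Lemma nonunitD (x y : R) : ~ is_unit_el x -> ~ is_unit_el y -> ~ is_unit_el (x + y).
Proof. by case: loc => _ H _; apply: H. Qed.

Lemma unitD (x y : R) : is_unit_el x -> ~ is_unit_el y -> is_unit_el (x + y).
Proof.
move=> ux ny; apply: NNPP => nxy; have := nonunitD nxy (nonunitM (r:=-1) ny).
by rewrite mulN1r addrK.
Qed.

Lemma nonunit_nilp (x : R) : ~ is_unit_el x -> exists N, x ^+ N = 0.
Proof.
move=> nx.
pose I n (y : R) := exists a, y = a * x ^+ n.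
have Iid : forall n, is_ideal (I n).
  move=> n; split.
  - by exists 0; rewrite mul0r.
  - by move=> a b [a1 ->] [b1 ->]; exists (a1 + b1); rewrite mulrDl.
  - by move=> r a [a1 ->]; exists (r * a1); rewrite mulrA.
have Idec : forall n y, I n.+1 y -> I n y.
  by rewrite /I => n y [a ->]; exists (a * x); rewrite exprS mulrA.
have [N HN] := art Iid Idec.
have : I N.+1 (x ^+ N).
  by apply (proj2 (HN N.+1 (leqnSn N) (x ^+ N))); exists 1; rewrite mul1r.
move=> [a Ha]; exists N.
have u : is_unit_el (1 - a * x).
  apply: NNPP => nu; have := nonunitD nu (nonunitM (r:=a) nx).
  by rewrite subrK; apply; apply: unit1.
case: u => y Hy.
have : x ^+ N * (1 - a * x) = 0.
  by rewrite mulrBr mulr1 mulrCA -exprSr -Ha subrr.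
by move=> H; rewrite -[x ^+ N]mulr1 -Hy mulrA H mul0r.
Qed.

End Local.

Section JIdeal.
Variables (R : comNzRingType) (v : nat) (p : 'I_v -> R).

Definition mono (e : {ffun 'I_v -> nat}) := \prod_(j < v) p j ^+ e j.
Definition J k (x : R) := exists s : seq (R * {ffun 'I_v -> nat}),
  x = \sum_(z <- s) z.1 * mono z.2 /\ all (fun z : R * {ffun 'I_v -> nat} => (k <= \sum_(j < v) z.2 j)%N) s.

Lemma J0 k : J k 0.
Proof. by exists [::]; rewrite big_nil. Qed.

Lemma JD k x y : J k x -> J k y -> J k (x + y).
Proof.
move=> [s1 [-> H1]] [s2 [-> H2]]; exists (s1 ++ s2).
by rewrite big_cat all_cat H1 H2.
Qed.

Lemma JM k r x : J k x -> J k (r * x).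
Proof.
move=> [s [-> H]]; exists (map (fun z : R * {ffun 'I_v -> nat} => (r * z.1, z.2)) s); split.
  by rewrite big_map mulr_sumr; apply: eq_bigr => z _ /=; rewrite mulrA.
by rewrite all_map; apply: sub_all H => z.
Qed.

Lemma Jall x : J 0 x.
Proof.
exists [:: (x, [ffun => 0%N])]; rewrite big_seq1 /mono /=; split => //.
by rewrite big1 ?mulr1 // => j _; rewrite ffunE expr0.
Qed.

Lemma Jp k (j : 'I_v) x : J k x -> J k.+1 (p j * x).
Proof.
move=> [s [-> H]]; pose dl := [ffun i : 'I_v => (i == j) : nat].
exists (map (fun z : R * {ffun 'I_v -> nat} => (z.1, [ffun i => z.2 i + dl i]%N)) s); split.
  rewrite big_map mulr_sumr; apply: eq_bigr => z _ /=.
  rewrite /mono (bigD1 j) //= [in RHS](bigD1 j) //= !ffunE eqxx addn1 exprS.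
  rewrite mulrCA !mulrA; congr (_ * _ * _).
  by apply: eq_bigr => i ij; rewrite !ffunE (negbTE ij) addn0.
rewrite all_map; apply: sub_all H => z /= Hz.
rewrite (eq_bigr (fun i => z.2 i + dl i)%N); last by move=> i _; rewrite ffunE.
have E : (\sum_(i < v) dl i = 1)%N.
  rewrite (bigD1 j) //= big1 ?ffunE ?eqxx ?addn0 //.
  by move=> i ij; rewrite ffunE (negbTE ij).
by rewrite big_split /= E addn1 ltnS.
Qed.

Lemma Jzero N x : (forall j, p j ^+ N = 0) -> J (v * N).+1 x -> x = 0.
Proof.
move=> HN [s [-> H]]; rewrite big_seq big1 // => z zs.
have := allP H z zs => /= Hz.
have [j Hj] : exists j, (N <= z.2 j)%N.
  apply: NNPP => nj.
  have : (\sum_(j < v) z.2 j <= v * N)%N.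
    rewrite -[v in (_ <= v * _)%N]card_ord -sum_nat_const; apply: leq_sum => i _.
    by rewrite leqNgt; apply/negP => Hi; apply: nj; exists i; apply: ltnW.
  by rewrite leqNgt Hz.
rewrite /mono (bigD1 j) //= -(subnKC Hj) exprD HN !mul0r.
by rewrite mulr0.
Qed.

End JIdeal.

Section Arith.
Variable R : comNzRingType.
Implicit Types f g h x y : nat -> R.
Definition ssub x y := fun n => x n - y n.

Lemma smulBr f x y : smul f (ssub x y) = ssub (smul f x) (smul f y).
Proof.
apply: functional_extensionality => n.
by rewrite /smul /ssub -sumrB; apply: eq_bigr => i _; rewrite mulrBr.
Qed.

Lemma smulBl f x y : smul (ssub x y) f = ssub (smul x f) (smul y f).
Proof. by rewrite smulC smulBr ![smul f _]smulC. Qed.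

Lemma smulNr f x : smul f (sopp x) = sopp (smul f x).
Proof. by rewrite smulC smulNl smulC. Qed.

Lemma smul1r f : smul f (sone R) = f.
Proof. by rewrite smulC smul1l. Qed.

Lemma Jsum v (p : 'I_v -> R) k m (F : 'I_m -> R) :
  (forall i, J p k (F i)) -> J p k (\sum_(i < m) F i).
Proof.
move=> H; elim/big_ind: _ => //; [exact: J0 | exact: JD].
Qed.
End Arith.

Section Weier.
Variable R : comNzRingType.
Hypothesis loc : local_ring R.
Hypothesis art : artinian R.
Variables (g : nat -> R) (v : nat).
Hypothesis Hlow : forall i, (i < v)%N -> ~ is_unit_el (g i).
Hypothesis Hv : is_unit_el (g v).

Let e := shl v g.
Let p := trunc v g.
Let gen : 'I_v -> R := fun j => g j.

Lemma e0a : exists a, e 0 * a = 1.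
Proof. by case: Hv => a Ha; exists a; rewrite /e /shl add0n. Qed.

Let a := proj1_sig (constructive_indefinite_description _ e0a).
Let ea : e 0 * a = 1 := proj2_sig (constructive_indefinite_description _ e0a).
Let einv := sinv e a.
Let einvK : smul einv e = sone R.
Proof. by rewrite smulC smul_sinv. Qed.

Lemma gen_nil : exists N, forall j, gen j ^+ N = 0.
Proof.
have [f Hf] := fin_all_exists (fun j : 'I_v => nonunit_nilp loc art (Hlow (ltn_ord j))).
exists (\max_(j < v) f j) => j.
rewrite -(subnKC (leq_bigmax j)) exprD.
by rewrite /gen Hf mul0r.
Qed.

Let N := proj1_sig (constructive_indefinite_description _ gen_nil).
Let HN : forall j, gen j ^+ N = 0 := proj2_sig (constructive_indefinite_description _ gen_nil).
Let M := (v * N).+1.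

Definition Top x := smul einv (shl v (smul x p)).

Lemma JT k x : (forall n, J gen k (x n)) -> forall n, J gen k.+1 (Top x n).
Proof.
move=> Hx n; rewrite /Top /smul; apply: Jsum => i; apply: JM.
rewrite /shl /smul; apply: Jsum => j.
rewrite /p /trunc; case: ltnP => Hj; last by rewrite mulr0; apply: J0.
have -> : g (n - i + v - j)%N = gen (Ordinal Hj) by [].
by rewrite mulrC; apply: Jp.
Qed.

Lemma TopB x y : Top (ssub x y) = ssub (Top x) (Top y).
Proof.
rewrite /Top -smulBr; congr smul.
by apply: functional_extensionality => n; rewrite smulBl.
Qed.

Lemma smul_g_shift c m : smul c g (m + v)%N = smul c e m + smul c p (m + v)%N.
Proof.
rewrite smulC {1}(shr_shl_trunc v g) smulDl /sadd shr_smul /shr leq_addl addnK.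
by rewrite ![smul _ c]smulC.
Qed.

Lemma weier_unique c r : (forall n, (v <= n)%N -> r n = 0) ->
  (forall n, smul c g n + r n = 0) -> forall n, c n = 0.
Proof.
move=> Hr Hc.
have Hce : smul c e = sopp (shl v (smul c p)).
  apply: functional_extensionality => m.
  have := Hc (m + v)%N; rewrite Hr ?leq_addl // addr0 smul_g_shift => /eqP.
  by rewrite addr_eq0 => /eqP ->.
have Hc2 : c = sopp (Top c).
  by rewrite /Top -smulNr -Hce [smul c e]smulC -smulA einvK smul1l.
have HJ : forall k n, J gen k (c n).
  elim=> [|k IH] n; first exact: Jall.
  rewrite Hc2 /sopp -mulN1r; apply: JM; exact: JT.
by move=> n; apply: (Jzero HN (HJ M n)).
Qed.

Fixpoint iter_c (h : nat -> R) k : nat -> R :=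
  match k with 0 => szero R | k'.+1 => ssub (smul einv (shl v h)) (Top (iter_c h k')) end.

Lemma weier_exists h : exists c, forall m, smul c g (m + v)%N = h (m + v)%N.
Proof.
pose h' := smul einv (shl v h).
have HJ : forall k n, J gen k (iter_c h k.+1 n - iter_c h k n).
  elim=> [|k IH] n; first exact: Jall.
  have -> : iter_c h k.+2 n - iter_c h k.+1 n = - Top (ssub (iter_c h k.+1) (iter_c h k)) n.
    by rewrite TopB /= /ssub; ring.
  rewrite -mulN1r; apply: JM; exact: JT.
set c := iter_c h M.
have Hc : c = ssub h' (Top c).
  apply: functional_extensionality => n.
  have := Jzero HN (HJ M n); move/eqP; rewrite subr_eq0 => /eqP E.
  by rewrite /c -E.
exists c => m.
rewrite smul_g_shift.
have -> : smul c e m = smul (ssub h' (Top c)) e m by rewrite -Hc.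
rewrite smulBl /ssub /h' /Top smulC -smulA [smul e _]smulC einvK smul1l.
rewrite smulC -smulA [smul e _]smulC einvK smul1l /shl.
by rewrite subrK.
Qed.

End Weier.
Lemma part1 (k : fieldType) (d : nat) (f : nat -> k) : LleA1_pt d f ->
  exists q u : nat -> k, [/\ Qd_pt d q, LGm_pt u & forall n, smul u q n = f n].
Proof.
move=> [c Hc].
have ex : exists n, (n <= d)%N && (f n != 0).
  apply: NNPP => H; move: Hc; rewrite big1 => [/eqP|i _]; first by rewrite eq_sym oner_eq0.
  case: (f i =P 0) => [->|/eqP fi]; first by rewrite mulr0.
  by exfalso; apply: H; exists i; rewrite fi -ltnS ltn_ord.
case: (ex_minnP ex) => v /andP[vd fv] vmin.
have flow : forall i, (i < v)%N -> f i = 0.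
  move=> i iv; apply/eqP; apply/negPn/negP => fi.
  have := vmin i; rewrite fi (leq_trans (ltnW iv) vd) => /(_ isT).
  by rewrite leqNgt iv.
set e := shl v f.
have ea : e 0 * (f v)^-1 = 1 by rewrite /e /shl add0n mulfV.
set einv := sinv e (f v)^-1.
have Hee : smul e einv = sone k by apply: smul_sinv.
pose r := fun n : nat => if n == 0%N then (1 : k) else if n == (d - v)%N then 1 else 0.
have r1 : r 0%N * 1 = 1 by rewrite /r eqxx mulr1.
set rinv := sinv r 1.
have Hrr : smul r rinv = sone k by apply: smul_sinv.
exists (shr v r), (smul e rinv); split.
- split.
    by rewrite /shr vd /r eqxx; case: ifP.
  move=> n dn; rewrite /shr (leq_trans vd (ltnW dn)) /r.
  have H1 : (n - v != 0)%N by rewrite subn_eq0 -ltnNge (leq_ltn_trans vd dn).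
  have H2 : (n - v != d - v)%N.
    by apply/negP => /eqP H; move: (subnK (leq_trans vd (ltnW dn))); rewrite H subnK // => E; move: dn; rewrite E ltnn.
  by rewrite (negbTE H1) (negbTE H2).
- exists (smul einv r).
  move=> n; rewrite smulA -[smul rinv (smul einv r)]smulA [smul rinv einv]smulC smulA.
  by rewrite [smul rinv r]smulC Hrr smul1r Hee.
- move=> n; rewrite smulC shr_smul -smulA [smul r e]smulC smulA Hrr smul1r /shr /e /shl.
  case: leqP => vn; first by rewrite subnK.
  by rewrite flow.
Qed.

Lemma scal_unit (K : fieldType) (A : comAlgType K) (c : K) : c != 0 -> is_unit_el (c%:A : A).
Proof.
move=> c0; exists (c^-1)%:A.
by rewrite mulr_algl scalerA mulfV // scale1r.
Qed.

Lemma red_lift (K : fieldType) (A B : comAlgType K) (phi : {lrmorphism A -> B}) (x : A) (c : K) :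
  ~ is_unit_el (phi x - c%:A) -> ~ is_unit_el (x - c%:A).
Proof.
move=> H [y Hy]; apply: H; exists (phi y).
by rewrite -(rmorph_alg phi) -rmorphB -rmorphM Hy rmorph1.
Qed.

Lemma regular_of (K : fieldType) (A : comAlgType K) (locA : local_ring A)
  (g : nat -> A) (s : nat -> K) v :
  (forall n, ~ is_unit_el (g n - (s n)%:A)) -> (forall i, (i < v)%N -> s i = 0) -> s v != 0 ->
  (forall i, (i < v)%N -> ~ is_unit_el (g i)) /\ is_unit_el (g v).
Proof.
move=> Hg Hs sv; split.
  by move=> i iv; have := Hg i; rewrite Hs // scale0r subr0.
have -> : g v = (s v)%:A + (g v - (s v)%:A) by rewrite addrC subrK.
by apply: unitD => //; apply: scal_unit.
Qed.

Lemma part2 (k : fieldType) (d : nat) (q u : nat -> k) :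
  Qd_pt d q -> LGm_pt u -> beta_formally_smooth_at d q u.
Proof.
move=> [qd qhi] [w Hw] A B phi locA artA locB artB surj qB uB fA HqB HuB Rq Ru _ Rf Hphi.
have phiB : forall x y : A, phi (x - y) = phi x - phi y by move=> x y; rewrite rmorphB.
have phiM : forall (f g : nat -> A) n, phi (smul f g n) = smul (fun i => phi (f i)) (fun i => phi (g i)) n.
  by move=> f g n; apply: smul_morph.
have phi0 : phi 0 = 0 by rewrite rmorph0.
have ex : exists n, q n != 0 by exists d; rewrite qd oner_eq0.
case: (ex_minnP ex) => v qv vmin.
have vd : (v <= d)%N by apply: vmin; rewrite qd oner_eq0.
have qlow : forall i, (i < v)%N -> q i = 0.
  move=> i iv; apply/eqP; apply/negPn/negP => qi.
  by have := vmin i qi; rewrite leqNgt iv.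
have u0 : u 0%N != 0.
  apply/negP => /eqP u0; have := Hw 0%N; rewrite smul0 u0 mul0r /sone eqxx.
  by move/eqP; rewrite eq_sym oner_eq0.
have uqlow : forall i, (i < v)%N -> smul u q i = 0.
  move=> i iv; rewrite /smul big1 // => j _; rewrite qlow ?mulr0 //.
  exact: leq_ltn_trans (leq_subr _ _) iv.
have uqv : smul u q v = u 0%N * q v.
  rewrite /smul big_ord_recl subn0 big1 ?addr0 // => j _.
  rewrite qlow ?mulr0 // /bump /= ltn_subrL /=.
  by case: v {vmin qv vd qlow uqlow} j => [[]|].
have [fAlow fAv] := regular_of locA Rf uqlow (ltac:(rewrite uqv; exact: mulf_neq0 u0 qv)).
have [qBlow qBv] := regular_of locB Rq qlow qv.
pose lift (b : B) := proj1_sig (constructive_indefinite_description _ (surj b)).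
have liftK : forall b, phi (lift b) = b.
  by move=> b; rewrite /lift; case: constructive_indefinite_description.
pose qA0 n := if (n < d)%N then lift (qB n) else if n == d then (1 : A) else 0.
have HqA0 : forall n, phi (qA0 n) = qB n.
  move=> n; rewrite /qA0; case: ltnP => nd; first exact: liftK.
  case: eqP => [->|/eqP nd']; first by rewrite rmorph1 HqB.1.
  by rewrite rmorph0 HqB.2 // ltn_neqAle eq_sym nd' nd.
have [c Hc] := weier_exists locA artA fAlow fAv qA0.
have Hc' : forall n, (v <= n)%N -> smul c fA n = qA0 n.
  by move=> n vn; rewrite -(subnK vn) Hc.
pose r n := qA0 n - smul c fA n.
pose pc := fun n => phi (c n).
have HphifA : (fun n => phi (fA n)) = smul uB qB by apply: functional_extensionality.
pose c' := ssub (smul pc uB) (sone B).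
have Heq : forall n, smul c' qB n + phi (r n) = 0.
  move=> n; rewrite /c' smulBl smul1l smulA /ssub /r phiB HqA0 phiM HphifA.
  by rewrite -/pc; ring.
have Hu' := weier_unique locB artB qBlow qBv (c := c') (r := fun n => phi (r n))
  (fun n vn => ltac:(by rewrite /r Hc' // subrr phi0)) Heq.
have Hc'0 : c' = szero B by apply: functional_extensionality.
have Hpr : forall n, phi (r n) = 0.
  by move=> n; have := Heq n; rewrite Hc'0 smul0l /szero add0r.
have Hpc : smul pc uB = sone B.
  apply: functional_extensionality => n; have := Hu' n; rewrite /c' /ssub.
  by move/eqP; rewrite subr_eq0 => /eqP.
have c0u : is_unit_el (c 0%N).
  apply: NNPP => nc; have [N HN] := nonunit_nilp locA artA nc.
  have := congr1 (fun f => f 0%N) Hpc; rewrite /= smul0 /sone eqxx /pc => H.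
  have : (phi (c 0%N) * uB 0%N) ^+ N = 1 by rewrite H expr1n.
  by rewrite exprMn -rmorphXn HN rmorph0 mul0r => /eqP; rewrite eq_sym oner_eq0.
case: c0u => a0 Ha0.
set uA := sinv c a0.
have HcuA : smul uA c = sone A by rewrite smulC smul_sinv.
have phi1 : forall n, phi (sone A n) = sone B n by move=> n; apply: sone_morph.
have HpuA : forall n, phi (uA n) = uB n.
  have E : (fun n => phi (uA n)) = uB.
    transitivity (smul (fun n => phi (uA n)) (smul pc uB)); first by rewrite Hpc smul1r.
    rewrite -smulA.
    have -> : smul (fun n => phi (uA n)) pc = sone B.
      by apply: functional_extensionality => n; rewrite -phiM HcuA phi1.
    by rewrite smul1l.
  by move=> n; rewrite -E.
exists (smul c fA), uA.
split; [|split; [|split; [|split; [|split; [|split]]]]].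
- split; first by rewrite Hc' // /qA0 ltnn eqxx.
  by move=> n dn; rewrite Hc' ?(leq_trans vd (ltnW dn)) // /qA0 ltnNge (ltnW dn) /= gtn_eqF.
- by exists c; rewrite HcuA.
- move=> n Hun; refine (@red_lift k A B phi (smul c fA n) (q n) _ Hun).
  have -> : phi (smul c fA n) = qB n.
    by have := Hpr n; rewrite /r phiB HqA0 => /eqP; rewrite subr_eq0 => /eqP.
  exact: Rq.
- move=> n Hun; refine (@red_lift k A B phi (uA n) (u n) _ Hun).
  by rewrite HpuA; exact: Ru.
- move=> n; have := Hpr n; rewrite /r phiB HqA0 => /eqP; rewrite subr_eq0 => /eqP.
  by [].
- exact: HpuA.
- by move=> n; rewrite -smulA HcuA smul1l.
Qed.

Theorem proposition3p8 (k : fieldType) (d : nat) :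
  (forall f : nat -> k, LleA1_pt d f ->
     exists q u : nat -> k, [/\ Qd_pt d q, LGm_pt u & forall n, smul u q n = f n]) /\
  (forall q u : nat -> k, Qd_pt d q -> LGm_pt u -> beta_formally_smooth_at d q u).
Proof.
split; [exact: part1 | exact: part2].
Qed.
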